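(* Fix integers $2\le k\le n'\le n$. The $n'$-grouped $(k,n)$ random-grid visual cryptography scheme described in the context is valid, i.e.: (i) for every set of $k$ of the $n$ shadow images, the recovered image obtained by stacking them has contrast $\alpha>0$; and (ii) for every $q<k$ and every set of $q$ shadow images, the recovered image obtained by stacking them has contrast $\alpha=0$.
   Context: Let $M=\lceil n/n'\rceil$, $r=n-(M-1)n'$. Each secret pixel $s\in\{0,1\}$ is shared independently as follows. Basic bits: $b_1,\ldots,b_{k-1}$ are independent uniform bits and $b_k=s\oplus b_1\oplus\cdots\oplus b_{k-1}$. There is a fixed sequence $c=(c_1,\ldots,c_{n'})\in\{1,\ldots,k\}^{n'}$ in which every value $1,\ldots,k$ occurs (the index pattern of the base $(k,n')$ scheme). The $n$ share bits form $M$ groups: groups $1,\ldots,M-1$ have $n'$ positions and group $M$ has $r$ positions. For each group $j$ an independent uniformly random permutation $\sigma_j$ of $\{1,\ldots,n'\}$ is drawn (independent of the $b_i$), and position $\delta$ of group $j$ receives the bit $b_{c_{\sigma_j(\delta)}}$ ($\delta\le r$ for group $M$); this bit is the pixel of shadow image number $(j-1)n'+\delta$. Stacking shadow images computes the OR of their bits at each pixel (0 = transparent, 1 = opaque). For a stacked set of shadow images, let $t_s$ be the probability that a recovered pixel equals $0$ given the secret pixel is $s$; the contrast is $\alpha=(t_0-t_1)/(1+t_1)$. *)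

(* Defs.v *)
From mathcomp Require Import all_boot all_order all_algebra all_fingroup.
Set Implicit Arguments. Unset Strict Implicit. Unset Printing Implicit Defensive.
Import GRing.Theory Num.Theory.
Local Open Scope ring_scope.

(* Conventions: everything is 0-based.  Basic bits are indexed by 'I_k
   (b_1..b_k of the paper = indices 0..k-1), positions of the base scheme by
   'I_n', shadow images by 'I_n.  Shadow image i (0-based) is position
   d = i %% n' of group j = i %/ n' (paper: image (j-1)n'+d, 1-based). *)

Definition ngroups (n n' : nat) : nat := ((n + n'.-1) %/ n')%N.

(* The random experiment: uniform free bits b_1..b_{k-1} and independent
   uniform permutations sigma_1..sigma_M. *)
Definition Omega (k n n' : nat) : finType :=
  ({ffun 'I_k.-1 -> bool} * {ffun 'I_(ngroups n n') -> {perm 'I_n'}})%type.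

Definition basic_bit (k : nat) (s : bool) (b : {ffun 'I_k.-1 -> bool})
  (i : 'I_k) : bool :=
  match insub (val i) : option 'I_k.-1 with
  | Some i' => b i'
  | None => addb s (\big[addb/false]_(j : 'I_k.-1) b j)
  end.

Definition share (k n n' : nat) (c : 'I_n' -> 'I_k) (s : bool)
  (w : Omega k n n') (i : 'I_n) : bool :=
  match insub (i %/ n')%N : option 'I_(ngroups n n') with
  | Some j =>
      match insub (i %% n')%N : option 'I_n' with
      | Some d => basic_bit s w.1 (c (w.2 j d))
      | None => false
      end
  | None => false
  end.

Definition stack (k n n' : nat) (c : 'I_n' -> 'I_k) (s : bool)
  (Q : {set 'I_n}) (w : Omega k n n') : bool :=
  [exists i in Q, share c s w i].

(* t_s = Pr[recovered pixel = 0 | secret = s], uniform probability on Omega *)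
Definition t_prob (k n n' : nat) (c : 'I_n' -> 'I_k) (s : bool)
  (Q : {set 'I_n}) : rat :=
  (#|[set w : Omega k n n' | ~~ stack c s Q w]|%:R / #|Omega k n n'|%:R).

Definition contrast (k n n' : nat) (c : 'I_n' -> 'I_k) (Q : {set 'I_n}) : rat :=
  (t_prob c false Q - t_prob c true Q) / (1 + t_prob c true Q).

(* Main.v *)
Require Import Defs.
From mathcomp Require Import all_boot all_order all_algebra all_fingroup zify lra.
Import GRing.Theory Num.Theory.
Set Implicit Arguments. Unset Strict Implicit. Unset Printing Implicit Defensive.

Lemma gj_lt (n' n : nat) (i : 'I_n) : (0 < n')%N -> (i %/ n' < ngroups n n')%N.
Proof.
move=> hn; rewrite /ngroups ltn_divLR //.
have := ltn_ord i. have := divn_eq (n + n'.-1) n'. have := ltn_pmod (n + n'.-1) hn. lia.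
Qed.

Definition gj (n' n : nat) (hn : (0 < n')%N) (i : 'I_n) : 'I_(ngroups n n') :=
  Ordinal (gj_lt i hn).
Definition dd (n' n : nat) (hn : (0 < n')%N) (i : 'I_n) : 'I_n' :=
  Ordinal (ltn_pmod i hn).

Lemma shareE k n' n (c : 'I_n' -> 'I_k) (hn : (0 < n')%N) s (w : Omega k n n') i :
  share c s w i = basic_bit s w.1 (c (w.2 (gj hn i) (dd hn i))).
Proof.
rewrite /share; case: insubP => [j _ hj|]; last by rewrite gj_lt.
case: insubP => [d _ hd|]; last by rewrite ltn_pmod.
have -> : j = gj hn i by apply: val_inj.
by have -> : d = dd hn i by apply: val_inj.
Qed.

Definition flipb k (x0 : 'I_k) (b : {ffun 'I_k.-1 -> bool}) : {ffun 'I_k.-1 -> bool} :=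
  [ffun j => b j (+) (val j == val x0)].

Lemma flipbK k (x0 : 'I_k) : involutive (flipb x0).
Proof. by move=> b; apply/ffunP=> j; rewrite !ffunE addbK. Qed.

Lemma basic_bit_flip k s b (x0 x : 'I_k) :
  x != x0 -> basic_bit (~~ s) (flipb x0 b) x = basic_bit s b x.
Proof.
move=> hx; rewrite /basic_bit.
case: insubP => [x' _ hx'|hx'].
  rewrite ffunE hx'; have -> : (val x == val x0) = false by apply/negbTE. by rewrite addbF.
have hx0 : (val x0 < k.-1)%N.
  have := ltn_ord x; have := ltn_ord x0.
  have hne : val x <> val x0 by apply/eqP. move: hne hx'; rewrite /= -leqNgt. lia.
rewrite (eq_bigr (fun j => b j (+) (j == Ordinal hx0))); last first.
  by move=> j _; rewrite ffunE.
rewrite big_split /=.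
have -> : \big[addb/false]_(j < k.-1) (j == Ordinal hx0) = true.
  rewrite (bigD1 (Ordinal hx0)) //= eqxx big1 //.
  by move=> j /negbTE.
by case: s; case: (\big[addb/false]_j b j).
Qed.

Lemma perm_ext (A T : finType) (h F : A -> T) (s : seq A) :
  (forall a b, a \in s -> b \in s -> (h a == h b) = (F a == F b)) ->
  exists sg : {perm T}, forall a, a \in s -> sg (h a) = F a.
Proof.
elim: s => [|x s IH] hyp; first by exists 1%g.
have [sg Hsg] : exists sg : {perm T}, forall a, a \in s -> sg (h a) = F a.
  apply: IH => a b ha hb; apply: hyp; rewrite inE ?ha ?hb orbT //.
exists (sg * tperm (sg (h x)) (F x))%g => a ha.
rewrite permM.
case hax: (h a == h x).
  have := hyp a x ha (mem_head _ _); rewrite hax => /esym/eqP ->.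
  by rewrite (eqP hax) tpermL.
have hFa : (F a == F x) = false by rewrite -hyp // mem_head.
have as' : a \in s.
  move: ha; rewrite inE => /orP [/eqP eax|//]; by rewrite eax eqxx in hax.
rewrite (Hsg a as'); apply: tpermD.
  by rewrite -(Hsg a as') (inj_eq perm_inj) eq_sym hax.
by rewrite eq_sym hFa.
Qed.

Definition Iset k n' n (c : 'I_n' -> 'I_k) (hn : (0 < n')%N) (Q : {set 'I_n})
  (p : {ffun 'I_(ngroups n n') -> {perm 'I_n'}}) : {set 'I_k} :=
  [set c (p (gj hn i) (dd hn i)) | i in Q].

Definition Phi k n' n (c : 'I_n' -> 'I_k) (hn : (0 < n')%N) (Q : {set 'I_n})
  (w : Omega k n n') : Omega k n n' :=
  (if [pick x in ~: Iset c hn Q w.2] is Some x0 then flipb x0 w.1 else w.1, w.2).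

Lemma Phi_inj k n' n (c : 'I_n' -> 'I_k) (hn : (0 < n')%N) (Q : {set 'I_n}) :
  injective (Phi c hn Q).
Proof.
move=> [b p] [b' p'] [e1 e2]; subst p'; move: e1.
by case: pickP => [x _|_] e1; congr pair; [exact: (can_inj (flipbK x)) | exact e1].
Qed.

Lemma stack_Phi k n' n (c : 'I_n' -> 'I_k) (hn : (0 < n')%N) (Q : {set 'I_n})
  s (w : Omega k n n') x0 :
  [pick x in ~: Iset c hn Q w.2] = Some x0 ->
  stack c (~~ s) Q (Phi c hn Q w) = stack c s Q w.
Proof.
move=> hp.
have hx0 : x0 \notin Iset c hn Q w.2.
  by move: hp; case: pickP => // y hy [<-]; rewrite -in_setC.
rewrite /stack /Phi hp /=; apply: eq_existsb => i.
case iQ: (i \in Q) => //=; rewrite !shareE /= basic_bit_flip //.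
apply: contraNneq hx0 => <-; exact: imset_f.
Qed.

Lemma stack_true_full k n' n (c : 'I_n' -> 'I_k) (hn : (0 < n')%N) (Q : {set 'I_n})
  (w : Omega k n n') : (0 < k)%N ->
  (forall x, x \in Iset c hn Q w.2) -> stack c true Q w.
Proof.
move=> hk hall; apply: contraT => hns.
have hz : forall x, basic_bit true w.1 x = false.
  move=> x; have /imsetP [i iQ ->] := hall x.
  apply/negbTE; move: hns; apply: contra => hb; apply/existsP; exists i.
  by rewrite iQ shareE.
have hb : forall j, w.1 j = false.
  move=> j; have := hz (widen_ord (leq_pred k) j); rewrite /basic_bit.
  case: insubP => [j' _ e|]; last by rewrite /= ltn_ord.
  by have -> : j' = j by apply: val_inj.
have hkl : (k.-1 < k)%N by rewrite ltn_predL.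
have := hz (Ordinal hkl); rewrite /basic_bit.
case: insubP => [j' _ e|_]; first by have := ltn_ord j'; rewrite e ltnn.
by rewrite big1.
Qed.

Lemma stack_false_zero k n' n (c : 'I_n' -> 'I_k) (Q : {set 'I_n})
  (p : {ffun 'I_(ngroups n n') -> {perm 'I_n'}}) :
  stack c false Q (([ffun=> false], p) : Omega k n n') = false.
Proof.
apply/existsP => -[i /andP [_]]; rewrite /share.
case: insub => // j; case: insub => // d.
rewrite /basic_bit; case: insub => [j'|]; first by rewrite ffunE.
by rewrite big1 // => j0 _; rewrite ffunE.
Qed.

Definition Sset k n' n (c : 'I_n' -> 'I_k) s (Q : {set 'I_n}) :=
  [set w : Omega k n n' | ~~ stack c s Q w].

Lemma card_eq k n' n (c : 'I_n' -> 'I_k) (hn : (0 < n')%N) (Q : {set 'I_n}) :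
  (forall p, exists x, x \notin Iset c hn Q p) ->
  #|Sset c false Q| = #|Sset c true Q|.
Proof.
move=> hex.
have le s : (#|Sset c s Q| <= #|Sset c (~~ s) Q|)%N.
  rewrite -(card_imset _ (@Phi_inj _ _ _ c hn Q)); apply: subset_leq_card.
  apply/subsetP => _ /imsetP [w hw ->]; move: hw; rewrite !inE.
  case hp: [pick x in ~: Iset c hn Q w.2] => [x0|].
    by rewrite (stack_Phi _ hp).
  move: hp; case: pickP => [y hy|hnone] // _.
  have [x hx] := hex w.2; by move: (hnone x); rewrite in_setC hx.
by apply/anti_leq; rewrite (le false) (le true).
Qed.

Lemma card_lt k n' n (c : 'I_n' -> 'I_k) (hn : (0 < n')%N) (Q : {set 'I_n}) p0 :
  (0 < k)%N -> (forall x, x \in Iset c hn Q p0) ->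
  (#|Sset c true Q| < #|Sset c false Q|)%N.
Proof.
move=> hk hfull.
have sub : Phi c hn Q @: Sset c true Q \subset Sset c false Q.
  apply/subsetP => _ /imsetP [w hw ->]; move: hw; rewrite !inE.
  case hp: [pick x in ~: Iset c hn Q w.2] => [x0|].
    by have := stack_Phi true hp; rewrite /= => ->.
  move: hp; case: pickP => [y hy|hnone] // _.
  by rewrite stack_true_full // => x; move: (hnone x); rewrite in_setC => /negbFE.
rewrite -[#|Sset c true Q|](card_imset _ (@Phi_inj _ _ _ c hn Q)).
pose ws := (([ffun=> false], p0) : Omega k n n').
have hw : ws \in Sset c false Q by rewrite inE stack_false_zero.
have hnot : ws \notin Phi c hn Q @: Sset c true Q.
  apply/imsetP => -[w hw' /(congr1 snd) /= e].
  by move: hw'; rewrite inE stack_true_full // -e.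
apply: (leq_trans _ (subset_leq_card (_ : ws |: Phi c hn Q @: Sset c true Q \subset Sset c false Q))).
  by rewrite cardsU1 hnot.
by rewrite subUset sub1set hw sub.
Qed.

Lemma full_exists k n' n (c : 'I_n' -> 'I_k) (hn : (0 < n')%N) (Q : {set 'I_n}) :
  (0 < k)%N -> #|Q| = k -> (forall x : 'I_k, exists y, c y = x) ->
  exists p, forall x, x \in Iset c hn Q p.
Proof.
move=> hk HQ csurj.
have csurj' : forall x, exists y, c y == x by move=> x; have [y <-] := csurj x; exists y.
pose g x := xchoose (csurj' x).
have cg : forall x, c (g x) = x by move=> x; exact: (eqP (xchooseP (csurj' x))).
have ginj : injective g := can_inj cg.
have /card_gt0P [i0 i0Q] : (0 < #|Q|)%N by rewrite HQ.
pose rk (i : 'I_n) : 'I_k := cast_ord HQ (enum_rank_in i0Q i).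
have rkinj : {in Q &, injective rk}.
  move=> a b aQ bQ /(congr1 val) /= e.
  rewrite -(enum_rankK_in i0Q aQ) -(enum_rankK_in i0Q bQ); congr enum_val; exact: val_inj.
pose F i := g (rk i).
have hper : forall j : 'I_(ngroups n n'), exists sg : {perm 'I_n'},
    forall i, i \in enum [set i in Q | gj hn i == j] -> sg (dd hn i) = F i.
  move=> j; apply: perm_ext => a b.
  rewrite !mem_enum !inE => /andP [aQ /eqP ja] /andP [bQ /eqP jb].
  rewrite /F (inj_eq ginj).
  apply/eqP/eqP => [e|/rkinj e]; last by rewrite (e aQ bQ).
  have -> : a = b; last by [].
  have e1 : (a %/ n' = b %/ n')%N by have := congr1 val ja; have := congr1 val jb; move=> /= -> ->.
  have e2 : (a %% n' = b %% n')%N by have := congr1 val e.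
  by apply: val_inj; rewrite /= (divn_eq a n') (divn_eq b n') e1 e2.
have [pf hpf] := fin_all_exists hper.
exists [ffun j => pf j] => x.
pose i := enum_val (cast_ord (esym HQ) x).
have iQ : i \in Q by exact: enum_valP.
have rki : rk i = x by apply: val_inj; rewrite /rk /= enum_valK_in.
apply/imsetP; exists i => //; rewrite ffunE hpf ?/F ?cg ?rki //.
by rewrite mem_enum inE iQ eqxx.
Qed.
Local Open Scope ring_scope.

Theorem theorem2 (k n' n : nat) (c : 'I_n' -> 'I_k) :
  (2 <= k)%N -> (k <= n')%N -> (n' <= n)%N ->
  (forall x : 'I_k, exists y : 'I_n', c y = x) ->
  (forall Q : {set 'I_n}, #|Q| = k -> 0 < contrast c Q) /\
  (forall Q : {set 'I_n}, (#|Q| < k)%N -> contrast c Q = 0).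
Proof.
move=> hk2 hkn hnn csurj.
have hk : (0 < k)%N by lia.
have hn : (0 < n')%N by lia.
split.
  move=> Q HQ.
  have [p0 hp0] := full_exists hn hk HQ csurj.
  have hlt := card_lt hk hp0.
  have hN : (0 < #|Omega k n n'|)%N.
    by apply/card_gt0P; exists (([ffun=> false], p0) : Omega k n n').
  rewrite /contrast /t_prob.
  have -> : #|[set w : Omega k n n' | ~~ stack c false Q w]| = #|Sset c false Q| by [].
  have -> : #|[set w : Omega k n n' | ~~ stack c true Q w]| = #|Sset c true Q| by [].
  set N := #|Omega k n n'| in hN *.
  set a := #|Sset c false Q| in hlt *.
  set b := #|Sset c true Q| in hlt *.
  have hNr : 0 < (N%:R : rat) by rewrite ltr0n.
  have hab : b%:R / N%:R < a%:R / N%:R :> rat.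
    by rewrite ltr_pM2r ?invr_gt0 // ltr_nat.
  have hb0 : 0 <= b%:R / N%:R :> rat by rewrite divr_ge0 ?ler0n.
  apply: divr_gt0; lra.
move=> Q HQ.
have hex : forall p, exists x, x \notin Iset c hn Q p.
  move=> p.
  have /subsetPn [x _ hx] : ~~ ([set: 'I_k] \subset Iset c hn Q p).
    apply/negP => /subset_leq_card; rewrite cardsT card_ord => H.
    have := leq_trans H (leq_imset_card _ _). by rewrite leqNgt HQ.
  by exists x.
rewrite /contrast /t_prob.
have -> : #|[set w : Omega k n n' | ~~ stack c false Q w]| = #|Sset c false Q| by [].
have -> : #|[set w : Omega k n n' | ~~ stack c true Q w]| = #|Sset c true Q| by [].
by rewrite (card_eq hex) subrr mul0r.
Qed.
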